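(* Let $s\geq 3$ and $v=3s$. Then there exist a cubic bipartite graph $\Gamma$ on $2s$ vertices, a symmetric configuration $\mathcal{X}$ on $v$ points with strong chromatic number 3, and a strong 3-colouring of $\mathcal{X}$ such that, for each of the three colour classes, the subgraph of the associated graph of $\mathcal{X}$ induced by the points of the other two colour classes is isomorphic to $\Gamma$.
   Context: A symmetric configuration $v_3$ consists of a set of $v$ points and a collection of $v$ blocks, each block being a 3-element subset of the points, such that every point lies in exactly 3 blocks and any two distinct points lie in at most one common block. The associated graph has the points as vertices, two points adjacent iff they lie in a common block. A strong colouring is an assignment of colours to points such that the three points of every block receive three distinct colours; the strong chromatic number is the minimum number of colours in a strong colouring. *)

(* Defs.v *)
From mathcomp Require Import all_boot.
Set Implicit Arguments. Unset Strict Implicit. Unset Printing Implicit Defensive.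

Definition simple_graph (T : finType) (G : rel T) : Prop :=
  irreflexive G /\ symmetric G.

Definition cubic (T : finType) (G : rel T) : Prop :=
  forall x : T, #|[set y | G x y]| = 3.

Definition bipartite (T : finType) (G : rel T) : Prop :=
  exists f : T -> bool, forall x y, G x y -> f x != f y.

Definition cubic_bipartite_graph (T : finType) (G : rel T) : Prop :=
  [/\ simple_graph G, cubic G & bipartite G].

Definition iso_induced (T U : finType) (G : rel T) (H : rel U) (S : {set U}) :
  Prop :=
  exists f : T -> U,
    [/\ injective f, forall u, u \in S <-> exists x, f x = u &
        forall x y, G x y = H (f x) (f y)].

Definition symmetric_configuration (P : finType) (B : {set {set P}}) : Prop :=
  [/\ #|B| = #|P|,
      forall b, b \in B -> #|b| = 3,
      forall x : P, #|[set b in B | x \in b]| = 3 &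
      forall x y : P, x != y -> #|[set b in B | (x \in b) && (y \in b)]| <= 1].

Definition config_graph (P : finType) (B : {set {set P}}) : rel P :=
  fun x y => (x != y) && [exists b in B, (x \in b) && (y \in b)].

Definition strong_colouring (P : finType) (B : {set {set P}}) (k : nat)
  (c : P -> 'I_k) : Prop :=
  forall b, b \in B -> forall x y, x \in b -> y \in b -> x != y -> c x != c y.

Definition strong_colourable (P : finType) (B : {set {set P}}) (k : nat) : Prop :=
  exists c : P -> 'I_k, strong_colouring B c.

Definition strong_chromatic_number (P : finType) (B : {set {set P}}) (k : nat)
  : Prop :=
  strong_colourable B k /\ forall j, j < k -> ~ strong_colourable B j.

(* Main.v *)
Require Import Defs.
From mathcomp Require Import all_boot all_order all_algebra.
From mathcomp Require Import ring zify.
Set Implicit Arguments. Unset Strict Implicit. Unset Printing Implicit Defensive.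
Import GRing.Theory.

Lemma modn_close (n u v : nat) : (u < v + n)%N -> (v < u + n)%N -> u %% n = v %% n -> u = v.
Proof.
wlog huv : u v / (u <= v)%N.
  move=> W h1 h2 h3; case: (leqP u v) => h; first exact: W.
  by symmetry; apply: W => //; apply: ltnW.
move=> h1 h2; have [w ?] : exists w, v = u + w by exists (v - u); lia.
subst v.
move=> /eqP; rewrite -{1}(addn0 u) eqn_modDl mod0n => /eqP.
rewrite modn_small; first by move=> <-; rewrite addn0.
lia.
Qed.

Section Constr.
Variable s' : nat.
Local Notation n := s'.+3.
Local Notation Z := 'I_n.
Local Open Scope ring_scope.

Lemma natZ_eq (u v : nat) : (u%:R = v%:R :> Z) -> (u %% n = v %% n)%N.
Proof. by move/(congr1 val); rewrite !Zp_nat. Qed.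

Definition sh (a k : 'I_3) : nat :=
  nth 0%N (nth [::] [:: [:: 0; 0; 0]; [:: 0; 1; 2]; [:: 1; 3; 2]]%N a) k.

Lemma sh_diff (a b k1 k2 : 'I_3) : a != b ->
  (sh b k1)%:R - (sh a k1)%:R = (sh b k2)%:R - (sh a k2)%:R :> Z -> k1 = k2.
Proof.
move=> hab h.
have : ((sh b k1 + sh a k2)%N)%:R = ((sh b k2 + sh a k1)%N)%:R :> Z.
  rewrite !natrD; apply/eqP; rewrite -subr_eq0; apply/eqP.
  transitivity (((sh b k1)%:R - (sh a k1)%:R) - ((sh b k2)%:R - (sh a k2)%:R) : Z).
    ring.
  by rewrite h subrr.
move: hab; clear h.
case: a => [[|[|[|a]]] ha] //; case: b => [[|[|[|b]]] hb] //;
case: k1 => [[|[|[|k1]]] hk1] //; case: k2 => [[|[|[|k2]]] hk2] //= hab;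
move/natZ_eq; rewrite /sh /= => /modn_close H; try (have H' := H ltac:(lia) ltac:(lia);
  solve [ apply: val_inj; reflexivity | exfalso; lia ]).
Qed.


Definition c0 : 'I_3 := Ordinal (isT : (0 < 3)%N).
Definition c1 : 'I_3 := Ordinal (isT : (1 < 3)%N).
Definition c2 : 'I_3 := Ordinal (isT : (2 < 3)%N).

Lemma exists3 (P : pred 'I_3) : [exists k, P k] = [|| P c0, P c1 | P c2].
Proof.
apply/existsP/or3P.
  by case=> -[[|[|[|k]]] hk] //= h; [constructor 1|constructor 2|constructor 3];
    move: h; congr (P _); apply: val_inj.
by case=> h; eexists; exact: h.
Qed.

Lemma kinj (k1 k2 : 'I_3) : (k1%:R = k2%:R :> Z) -> k1 = k2.
Proof.
move/natZ_eq; rewrite !modn_small => [h||]; first exact: val_inj.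
all: by apply: leq_trans (ltn_ord _) _.
Qed.

Local Notation Q := ('I_3 * Z)%type.
Definition inc (p q : Q) : bool := p.2 == q.2 + (sh p.1 q.1)%:R.

Lemma inc_col (p1 p2 q : Q) : inc p1 q -> inc p2 q -> p1.1 = p2.1 -> p1 = p2.
Proof.
case: p1 p2 => a1 m1 [a2 m2]; rewrite /inc /= => /eqP -> /eqP -> e.
by rewrite e.
Qed.

Lemma inc_pair (p1 p2 q1 q2 : Q) : p1 != p2 -> inc p1 q1 -> inc p2 q1 ->
  inc p1 q2 -> inc p2 q2 -> q1 = q2.
Proof.
move=> hne h11 h21 h12 h22.
case: (eqVneq p1.1 p2.1) => hc.
  by rewrite (inc_col h11 h21 hc) eqxx in hne.
move: h11 h21 h12 h22; case: p1 p2 q1 q2 hc {hne} => a m1 [b m2] [k1 j1] [k2 j2] /= hab.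
rewrite /inc /= => /eqP e1 /eqP e2 /eqP e3 /eqP e4.
have hk : k1 = k2.
  apply: (sh_diff hab).
  transitivity (m2 - m1).
    by rewrite e2 e1; ring.
  by rewrite e4 e3; ring.
subst k2; congr pair; apply: (addIr (sh a k1)%:R); by rewrite -e1 -e3.
Qed.

Lemma sh_c0 k : sh c0 k = 0%N. Proof. by case: k => -[|[|[|]]]. Qed.

Section Bij.
Variables (T : finType) (m : nat) (H : #|T| = m).
Definition enc (p : T) : 'I_m := cast_ord H (enum_rank p).
Definition dec (x : 'I_m) : T := enum_val (cast_ord (esym H) x).
Lemma encK : cancel enc dec.
Proof. by move=> p; rewrite /enc /dec cast_ordK enum_rankK. Qed.
Lemma decK : cancel dec enc.
Proof. by move=> x; rewrite /enc /dec enum_valK cast_ordKV. Qed.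
Lemma mem_enc (S : {set T}) x : (x \in enc @: S) = (dec x \in S).
Proof.
apply/imsetP/idP => [[p hp ->]|h]; first by rewrite encK.
by exists (dec x); rewrite ?decK.
Qed.
End Bij.

Lemma cardQ : #|{: Q}| = (3 * n)%N.
Proof. by rewrite card_prod !card_ord. Qed.

Definition e := enc cardQ.
Definition d := dec cardQ.
Definition bp (q : Q) : {set Q} := [set p | inc p q].
Definition blk (q : Q) : {set 'I_(3 * n)} := e @: bp q.
Definition BB : {set {set 'I_(3 * n)}} := blk @: [set: Q].

Lemma memblk x q : (x \in blk q) = inc (d x) q.
Proof. by rewrite /blk mem_enc inE. Qed.

Lemma card_bp q : #|bp q| = 3.
Proof.
have -> : bp q = (fun a => (a, q.2 + (sh a q.1)%:R)) @: [set: 'I_3].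
  apply/setP => -[a m]; rewrite inE /inc /=; apply/eqP/imsetP => [->|[a' _ [-> ->]]] //.
  by exists a; rewrite ?in_setT.
by rewrite card_imset ?cardsT ?card_ord // => a1 a2 [].
Qed.

Lemma card_blk q : #|blk q| = 3.
Proof. by rewrite /blk card_imset ?card_bp //; apply: can_inj (encK cardQ). Qed.

Lemma blk_inj : injective blk.
Proof.
move=> [k1 j1] [k2 j2] /(imset_inj (can_inj (encK cardQ))) E.
have h0 : (c0, j1 + (sh c0 k1)%:R) \in bp (k2, j2).
  by rewrite -E inE /inc.
have h1 : (c1, j1 + (sh c1 k1)%:R) \in bp (k2, j2).
  by rewrite -E inE /inc.
move: h0 h1; rewrite !inE /inc /= !sh_c0 !addr0 => /eqP ej; subst j2.
move=> /eqP /addrI hk.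
have : k1 = k2.
  apply: (sh_diff (a := c0) (b := c1)) => //.
  by rewrite !sh_c0 hk.
by move->.
Qed.

Lemma incE (p : Q) : [set q | inc p q] = (fun k => (k, p.2 - (sh p.1 k)%:R)) @: [set: 'I_3].
Proof.
apply/setP => -[k j]; rewrite inE /inc /=; apply/eqP/imsetP => [->|[k' _ [-> ->]]].
  by exists k; rewrite ?in_setT // addrK.
by rewrite subrK.
Qed.

Lemma card_inc p : #|[set q | inc p q]| = 3.
Proof. by rewrite incE card_imset ?cardsT ?card_ord // => a1 a2 []. Qed.


Lemma BB_mem b : reflect (exists q, b = blk q) (b \in BB).
Proof.
apply: (iffP imsetP) => [[q _ ->]|[q ->]]; first by exists q.
by exists q; rewrite ?in_setT.
Qed.

Lemma config_ok : symmetric_configuration BB.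
Proof.
split.
- by rewrite card_imset ?cardsT ?cardQ ?card_ord //; apply: blk_inj.
- by move=> b /BB_mem [q ->]; apply: card_blk.
- move=> x.
  have -> : [set b in BB | x \in b] = blk @: [set q | inc (d x) q].
    apply/setP => b; rewrite inE; apply/andP/imsetP => [[/BB_mem [q ->]]|[q]].
      by rewrite memblk => h; exists q; rewrite ?inE.
    rewrite inE => h ->; split; first by apply/BB_mem; exists q.
    by rewrite memblk.
  by rewrite card_imset ?card_inc //; apply: blk_inj.
- move=> x y hxy; apply/card_le1_eqP => b1 b2.
  rewrite !inE => /andP [/BB_mem [q1 ->]] /andP [hx1 hy1] /andP [/BB_mem [q2 ->]] /andP [hx2 hy2].
  rewrite !memblk in hx1 hy1 hx2 hy2.
  have hne : d x != d y by apply: contra hxy => /eqP /(can_inj (decK cardQ)) ->.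
  by rewrite (inc_pair hne hx1 hy1 hx2 hy2).
Qed.

Definition col (x : 'I_(3 * n)) : 'I_3 := (d x).1.

Lemma col_strong : strong_colouring BB col.
Proof.
move=> b /BB_mem [q ->] x y; rewrite !memblk => hx hy; apply: contra => /eqP hc.
by apply/eqP; apply: (can_inj (decK cardQ)); apply: inc_col hx hy hc.
Qed.

Lemma chrom : strong_chromatic_number BB 3.
Proof.
split; first by exists col; apply: col_strong.
move=> j hj [c hc].
have hb : blk (c0, 0) \in BB by apply/BB_mem; exists (c0, 0).
have : #|c @: blk (c0, 0)| = 3.
  rewrite card_in_imset ?card_blk // => x y hx hy hxy.
  by apply/eqP; apply: contraT => hne; move: (hc _ hb x y hx hy hne); rewrite hxy eqxx.
move=> h; have := max_card (c @: blk (c0, 0)).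
rewrite h card_ord => h2; lia.
Qed.


Local Notation R := (bool * Z)%type.
Lemma cardR : #|{: R}| = (2 * n)%N.
Proof. by rewrite card_prod card_bool card_ord. Qed.
Definition e2 := enc cardR.
Definition d2 := dec cardR.

Definition ga (p1 p2 : R) : bool :=
  match p1.1, p2.1 with
  | false, true => [exists k : 'I_3, p2.2 - p1.2 == (k : nat)%:R]
  | true, false => [exists k : 'I_3, p1.2 - p2.2 == (k : nat)%:R]
  | _, _ => false
  end.

Definition GG : rel 'I_(2 * n) := fun u v => ga (d2 u) (d2 v).

Lemma card_ga p : #|[set p' | ga p p']| = 3.
Proof.
case: p => -[] m.
- have -> : [set p' | ga (true, m) p'] = (fun k : 'I_3 => (false, m - (k : nat)%:R)) @: [set: 'I_3].
    apply/setP => -[[] m']; rewrite inE /ga /=.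
      by apply/esym/imsetP => -[k _ []].
    apply/existsP/imsetP => [[k /eqP h]|[k _ [h]]].
      by exists k; rewrite ?in_setT // -h opprB addrC subrK.
    by exists k; apply/eqP; rewrite h; ring.
  rewrite card_imset ?cardsT ?card_ord // => k1 k2 /(congr1 snd) /= /(addrI m) /oppr_inj; exact: kinj.
- have -> : [set p' | ga (false, m) p'] = (fun k : 'I_3 => (true, m + (k : nat)%:R)) @: [set: 'I_3].
    apply/setP => -[[] m']; rewrite inE /ga /=; last first.
      by apply/esym/imsetP => -[k _ []].
    apply/existsP/imsetP => [[k /eqP h]|[k _ [h]]].
      by exists k; rewrite ?in_setT // -h addrC subrK.
    by exists k; apply/eqP; rewrite h; ring.
  rewrite card_imset ?cardsT ?card_ord // => k1 k2 /(congr1 snd) /= /(addrI m); exact: kinj.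
Qed.

Lemma GG_ok : cubic_bipartite_graph GG.
Proof.
split.
- split.
    by move=> x; rewrite /GG /ga; case: (d2 x).1.
  by move=> x y; rewrite /GG /ga; case: (d2 x).1; case: (d2 y).1.
- move=> x.
  have -> : [set y | GG x y] = e2 @: [set p' | ga (d2 x) p'].
    by apply/setP => y; rewrite /e2 mem_enc !inE.
  by rewrite card_imset ?card_ga //; apply: can_inj (encK cardR).
- exists (fun u => (d2 u).1) => x y; rewrite /GG /ga.
  by case: (d2 x).1; case: (d2 y).1.
Qed.

Definition pa (i : 'I_3) : 'I_3 := if i == c0 then c1 else c0.
Definition pb (i : 'I_3) : 'I_3 := if i == c2 then c1 else c2.
Definition tt (i : 'I_3) : nat := if i == c1 then 1%N else 0%N.

Lemma pab i : pa i != pb i. Proof. by case: i => -[|[|[|]]]. Qed.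
Lemma pai i : pa i != i. Proof. by case: i => -[|[|[|]]]. Qed.
Lemma pbi i : pb i != i. Proof. by case: i => -[|[|[|]]]. Qed.
Lemma pother i a : a != i -> a != pa i -> a = pb i.
Proof.
by case: i => -[|[|[|]]] hi //; case: a => -[|[|[|]]] ha //= _ _; apply: val_inj.
Qed.

Definition phi (i : 'I_3) (p : R) : Q :=
  if p.1 then (pb i, p.2 + (tt i)%:R) else (pa i, p.2).
Definition ff i (u : 'I_(2 * n)) : 'I_(3 * n) := e (phi i (d2 u)).

Definition adjQ (p1 p2 : Q) := (p1 != p2) && [exists q, inc p1 q && inc p2 q].

Lemma cg_e p1 p2 : config_graph BB (e p1) (e p2) = adjQ p1 p2.
Proof.
rewrite /config_graph /adjQ (inj_eq (can_inj (encK cardQ))); congr andb.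
apply/existsP/existsP => [[b /andP [/BB_mem [q ->] /andP [h1 h2]]]|[q /andP [h1 h2]]].
  by exists q; rewrite !memblk /d !encK in h1 h2 *; rewrite h1 h2.
exists (blk q); rewrite !memblk /d !encK h1 h2 !andbT.
by apply/BB_mem; exists q.
Qed.

Lemma adjQC p1 p2 : adjQ p1 p2 = adjQ p2 p1.
Proof.
rewrite /adjQ eq_sym; congr andb.
by apply/existsP/existsP => -[q /andP [h1 h2]]; exists q; rewrite h1 h2.
Qed.

Lemma adj_same p1 p2 : p1.1 = p2.1 -> adjQ p1 p2 = false.
Proof.
move=> hc; rewrite /adjQ; case: eqVneq => //= hne.
apply/existsP => -[q /andP [h1 h2]].
by rewrite (inc_col h1 h2 hc) eqxx in hne.
Qed.

Lemma adj_cross p1 p2 : p1.1 != p2.1 ->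
  adjQ p1 p2 = [exists k, p2.2 - p1.2 == (sh p2.1 k)%:R - (sh p1.1 k)%:R].
Proof.
case: p1 p2 => a m1 [b m2] /= hab; rewrite /adjQ.
case: (@eqVneq _ (a, m1) (b, m2)) => [E|_] /=.
  by move: E hab => /(congr1 fst) /= ->; rewrite eqxx.
apply/existsP/existsP => [[[k j] /andP [/eqP h1 /eqP h2]]|[k /eqP h]].
  by exists k; apply/eqP; rewrite /= in h1 h2; rewrite h1 h2; ring.
exists (k, m1 - (sh a k)%:R); apply/andP; split; apply/eqP; rewrite /=.
  by ring.
transitivity ((m2 - m1) + m1); first by ring.
by rewrite h; ring.
Qed.

Lemma Lsh (X t Y Y' : Z) : Y - t = Y' -> (X + t == Y) = (X == Y').
Proof.
move=> <-; apply/eqP/eqP => [<-|->]; first by rewrite addrK.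
by rewrite subrK.
Qed.

Lemma cross_eq i (X : Z) :
  [exists k, X + (tt i)%:R == (sh (pb i) k)%:R - (sh (pa i) k)%:R] =
  [exists k : 'I_3, X == (k : nat)%:R].
Proof.
rewrite !exists3.
case: i => -[|[|[|i]]] hi //=; rewrite /pa /pb /tt /sh /=.
-
  rewrite (@Lsh _ _ _ 1%:R); last by ring.
  rewrite (@Lsh _ _ _ 2%:R); last by ring.
  rewrite (@Lsh _ _ _ 0%:R); last by ring.
  by case: (X == 0%:R); case: (X == 1%:R); case: (X == 2%:R).
-
  rewrite (@Lsh _ _ _ 0%:R); last by ring.
  rewrite (@Lsh _ _ _ 2%:R); last by ring.
  rewrite (@Lsh _ _ _ 1%:R); last by ring.
  by case: (X == 0%:R); case: (X == 1%:R); case: (X == 2%:R).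
-
  rewrite (@Lsh _ _ _ 0%:R); last by ring.
  rewrite (@Lsh _ _ _ 1%:R); last by ring.
  rewrite (@Lsh _ _ _ 2%:R); last by ring.
  by case: (X == 0%:R); case: (X == 1%:R); case: (X == 2%:R).
Qed.


Lemma iso_ok (i : 'I_3) : iso_induced GG (config_graph BB) [set x | col x != i].
Proof.
exists (ff i); split.
- move=> u v /(can_inj (encK cardQ)) h; apply: (can_inj (decK cardR)).
  move: h; rewrite /phi /d2.
  case: (dec cardR u) => bu mu; case: (dec cardR v) => bv mv /=.
  case: bu; case: bv => /= h.
  + by have := congr1 snd h; rewrite /= => /addIr ->.
  + by move: (pab i); have := congr1 fst h; rewrite /= => ->; rewrite eqxx.
  + by move: (pab i); have := congr1 fst h; rewrite /= => ->; rewrite eqxx.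
  + by have := congr1 snd h; rewrite /= => ->.
- move=> u; rewrite inE /col /ff; rewrite -[u](decK cardQ).
  rewrite /d (encK cardQ); move: (dec cardQ u) => [a m] /=.
  split.
    move=> ha; case: (eqVneq a (pa i)) => hpa.
      by exists (e2 (false, m)); rewrite /d2 encK /phi /= hpa.
    exists (e2 (true, m - (tt i)%:R)); rewrite /d2 encK /phi /= subrK.
    by rewrite -(pother ha hpa).
  move=> [x]; rewrite /phi; case: (d2 x).1 => /(can_inj (encK cardQ)) /(congr1 fst) /= <-.
    exact: pbi.
  exact: pai.
- move=> x y; rewrite /ff cg_e /GG /phi.
  case: (d2 x) => bx mx; case: (d2 y) => b2 my /=.
  case: bx; case: b2 => /=.
  + by rewrite adj_same.
  + rewrite /ga /= adjQC adj_cross ?pab //= -(cross_eq i (mx - my)).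
    by have -> : mx + (tt i)%:R - my = mx - my + (tt i)%:R by ring.
  + rewrite /ga /= adj_cross ?pab //= -(cross_eq i (my - mx)).
    by have -> : my + (tt i)%:R - mx = my - mx + (tt i)%:R by ring.
  + by rewrite adj_same.
Qed.

End Constr.

Theorem mainTheorem13 (s : nat) : 3 <= s ->
  exists (G : rel 'I_(2 * s)) (B : {set {set 'I_(3 * s)}}) (c : 'I_(3 * s) -> 'I_3),
    [/\ cubic_bipartite_graph G,
        symmetric_configuration B,
        strong_chromatic_number B 3,
        strong_colouring B c &
        forall i : 'I_3, iso_induced G (config_graph B) [set x | c x != i]].
Proof.
move=> hs; have [s' ->] : exists s', s = s'.+3 by exists (s - 3); lia.
exists (@GG s'), (@BB s'), (@col s'); split.
- exact: GG_ok.
- exact: config_ok.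
- exact: chrom.
- exact: col_strong.
- exact: iso_ok.
Qed.
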